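(* Let $G=(V,E)$ be a finite simple undirected graph with distinct vertex IDs and let $K$ be a positive integer with $\delta(G)\ge K$. Run the procedure Efficient-VM on $G$ with parameter $K$. Then the virtual memory of each active vertex is increased by $K$: for every vertex $v$, in the round in which the color class of $v$ is active, none of the $K$ vertices selected by $v$ is active, and no active vertex other than $v$ selected any of them. Hence during that round the memories of these $K$ vertices are assigned solely to $v$.
   Context: $\Gamma(v)$ is the neighbor set of $v$, $\deg(v)=|\Gamma(v)|$, $\delta(G)=\min_v\deg(v)$. Operation $K$-Next-Modulo$(v,\Gamma(v),K)$: list $\Gamma(v)\cup\{v\}$ in ascending ID order as $u_1,\dots,u_d$ ($d=\deg(v)+1$) with $v=u_i$; $v$ selects $u_{i+1},\dots,u_{i+K}$, indices cyclic modulo $d$. Procedure Efficient-VM$(G,K)$ (synchronous distributed CONGEST model): (1) every vertex $v$ selects its $K$ neighbors by $K$-Next-Modulo (one round); let $G'=(V,E')$ where $E'$ consists of the edges $\{v,u\}$ such that $v$ selected $u$; (2) compute a 2-hop coloring of $G'$, i.e. a coloring in which any two distinct vertices at distance at most $2$ in $G'$ get different colors (by running Linial's coloring algorithm on $G'^2$); (3) process the color classes one per round in round-robin order; in the round of a color class, exactly the vertices of that class are active, and each active vertex $v$ distributes its backup data to the $K$ vertices it selected, using their memories. *)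

(* Defs.v *)
From mathcomp Require Import all_boot all_order.
Set Implicit Arguments. Unset Strict Implicit. Unset Printing Implicit Defensive.

Section EfficientVM.
Variables (T : finType) (adj : rel T) (id : T -> nat).

Definition simple_graph := symmetric adj /\ irreflexive adj.

Definition nbrs (v : T) : {set T} := [set u | adj v u].
Definition deg (v : T) : nat := #|nbrs v|.

Definition closed_nbhd_sorted (v : T) : seq T :=
  sort (fun a b => id a <= id b) [seq u <- enum T | adj v u || (u == v)].

(* K-Next-Modulo(v, Gamma(v), K): with v = u_i (0-based index here),
   v selects u_{i+1}, ..., u_{i+K}, indices cyclic modulo d. *)
Definition selected (K : nat) (v : T) : seq T :=
  let s := closed_nbhd_sorted v in
  let d := size s in
  let i := index v s in
  [seq nth v s ((i + j) %% d) | j <- iota 1 K].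

Definition selects (K : nat) (v u : T) : bool := u \in selected K v.

Definition Gp_edge (K : nat) (u w : T) : bool := selects K u w || selects K w u.

Definition two_hop_coloring (K : nat) (col : T -> nat) : Prop :=
  forall u w : T, u != w ->
    (Gp_edge K u w \/ exists x, Gp_edge K u x /\ Gp_edge K x w) ->
    col u != col w.

End EfficientVM.

(* Main.v *)
Require Import Defs.
From mathcomp Require Import all_boot all_order.
From mathcomp Require Import zify.

Lemma modn_2 (x d : nat) : x < d + d -> x %% d = (if x < d then x else x - d).
Proof.
move=> h2; case: (ltnP x d) => h1; first by rewrite modn_small.
have -> : x = (x - d) + d by rewrite subnK.
rewrite modnDr modn_small; first by rewrite addnK.
lia.
Qed.

Theorem lemma1 (T : finType) (adj : rel T) (id : T -> nat) (K : nat)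
  (col : T -> nat) :
  simple_graph adj ->
  injective id ->
  0 < K ->
  (forall v : T, K <= deg adj v) ->
  two_hop_coloring adj id K col ->
  forall v : T,
    [/\ size (selected adj id K v) = K,
        uniq (selected adj id K v),
        v \notin selected adj id K v,
        (forall u, selects adj id K v u -> col u != col v) &
        (forall u w, selects adj id K v u -> w != v -> col w = col v ->
           ~~ selects adj id K w u)].
Proof.
move=> [_ irr] _ K0 hdeg hcol v.
have notin_sel : forall w, w \notin selected adj id K w.
  move=> w.
  rewrite /selected.
  set s := closed_nbhd_sorted adj id w.
  have us : uniq s by rewrite /s /closed_nbhd_sorted sort_uniq filter_uniq // enum_uniq.
  have ms : s =i [set w] :|: nbrs adj w.
    move=> u; rewrite /s /closed_nbhd_sorted mem_sort mem_filter mem_enum andbT.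
    by rewrite !inE orbC.
  have ds : size s = (deg adj w).+1.
    rewrite -(card_uniqP us) (eq_card ms) cardsU1.
    by rewrite /nbrs inE irr.
  have wi : w \in s by rewrite ms !inE eqxx.
  have il : index w s < size s by rewrite index_mem.
  have hK := hdeg w.
  apply/mapP => -[j]; rewrite mem_iota => /andP [j1 j2] e.
  have e2 : nth w s (index w s) = nth w s ((index w s + j) %% size s) by rewrite nth_index.
  move/eqP: e2; rewrite nth_uniq // ?ltn_mod; last by lia.
  rewrite modn_2; last by lia.
  by case: ifP => hh /eqP => hh2; lia.

split.
- by rewrite /selected size_map size_iota.
- rewrite /selected.
  set s := closed_nbhd_sorted adj id v.
  have us : uniq s by rewrite /s /closed_nbhd_sorted sort_uniq filter_uniq // enum_uniq.
  have ms : s =i [set v] :|: nbrs adj v.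
    move=> u; rewrite /s /closed_nbhd_sorted mem_sort mem_filter mem_enum andbT.
    by rewrite !inE orbC.
  have ds : size s = (deg adj v).+1.
    rewrite -(card_uniqP us) (eq_card ms) cardsU1.
    by rewrite /nbrs inE irr.
  have vi : v \in s by rewrite ms !inE eqxx.
  have il : index v s < size s by rewrite index_mem.
  have hK := hdeg v.
  rewrite map_inj_in_uniq ?iota_uniq //.
  move=> a b; rewrite !mem_iota => /andP [a1 a2] /andP [b1 b2] /eqP.
  rewrite nth_uniq // ?ltn_mod; try lia.
  rewrite !modn_2; try lia.
  by case: ifP => h3; case: ifP => h4 /eqP; lia.
- exact: notin_sel.
- move=> u su; rewrite eq_sym; apply: hcol.
    by apply/eqP => e; move: su; rewrite e; apply/negP; exact: notin_sel.
  by left; rewrite /Gp_edge su.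
- move=> u w su wv cw; apply/negP => sw.
  have : col v != col w.
    apply: hcol; first by rewrite eq_sym.
    by right; exists u; rewrite /Gp_edge su sw orbT.
  by rewrite cw eqxx.
Qed.
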